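(* Let $f:\mathcal{X}\to\mathbb{R}$, $\tau\in\mathbb{R}$, and let $\mathbf{x}=[x_1,\dots,x_p]$ be an input with $f(\mathbf{x})\ge\tau$ and $f(\mathbf{x}_{\varnothing})<\tau$. Let $S_1,\dots,S_K$ be the output of $\mathrm{SIScollection}(f,\mathbf{x},\tau)$. Then: (i) for every $k\in\{1,\dots,K\}$ and every $i\in S_k$, $f(\mathbf{x}_{S_k\setminus\{i\}})<\tau$; (ii) for every $k$, let $T_k\subseteq[p]$ be the set passed to $\mathrm{BackSelect}$ in the call that produced $S_k$, and let $T_k=U^{(k)}_{m}\supsetneq U^{(k)}_{m-1}\supsetneq\cdots\supsetneq U^{(k)}_0=\varnothing$ ($m=|T_k|$) be the successive values taken by the variable $S$ during that run of $\mathrm{BackSelect}$. Then $S_k$ is one of the sets $U^{(k)}_j$, it satisfies $f(\mathbf{x}_{S_k})\ge\tau$, and every $U^{(k)}_j$ with $f(\mathbf{x}_{U^{(k)}_j})\ge\tau$ satisfies $|U^{(k)}_j|\ge|S_k|$.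
   Context: Each input $\mathbf{x}\in\mathcal{X}$ has indexable features $\mathbf{x}=[x_1,\dots,x_p]$ with $x_i\in\mathbb{R}^{d_i}$. A fixed mask value $z_i$ is given for each feature $i$ (e.g. the mean of feature $i$). For $S\subseteq[p]=\{1,\dots,p\}$, $\mathbf{x}_S$ denotes the input whose $i$-th feature equals $x_i$ if $i\in S$ and $z_i$ if $i\notin S$ (so $\mathbf{x}_{[p]}=\mathbf{x}$, $\mathbf{x}_\varnothing=\mathbf{z}$). Algorithms (argmax ties are broken by any fixed rule): BackSelect$(f,\mathbf{x},S)$: let $R$ be an empty stack; while $S\neq\varnothing$: let $i^*=\arg\max_{i\in S} f(\mathbf{x}_{S\setminus\{i\}})$, set $S\leftarrow S\setminus\{i^*\}$, push $i^*$ onto $R$; return $R$. FindSIS$(f,\mathbf{x},\tau,R)$: let $S=\varnothing$; while $f(\mathbf{x}_S)<\tau$: pop $i$ from the top of $R$ and set $S\leftarrow S\cup\{i\}$; if $f(\mathbf{x}_S)\ge\tau$ return $S$, else return None. SIScollection$(f,\mathbf{x},\tau)$: let $S=[p]$; for $k=1,2,\dots$: $R=\mathrm{BackSelect}(f,\mathbf{x},S)$; $S_k=\mathrm{FindSIS}(f,\mathbf{x},\tau,R)$; $S\leftarrow S\setminus S_k$; if $f(\mathbf{x}_S)<\tau$, return $S_1,\dots,S_k$. *)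

(* Defs.v *)
From HB Require Import structures.
From mathcomp Require Import all_boot all_order all_algebra.
Set Implicit Arguments. Unset Strict Implicit. Unset Printing Implicit Defensive.
Import Order.TTheory GRing.Theory Num.Theory.
Local Open Scope ring_scope.

Definition input (R : Type) (p : nat) (d : 'I_p -> nat) :=
  forall i : 'I_p, 'rV[R]_(d i).

Definition xmask (R : Type) (p : nat) (d : 'I_p -> nat)
  (x z : input R d) (S : {set 'I_p}) : input R d :=
  fun i => if i \in S then x i else z i.

Section Algorithms.
Variables (R : realDomainType) (p : nat).

(* A fixed argmax rule: am S h is a maximizer of h over the nonempty set S
   (ties broken in an arbitrary but fixed way). *)
Definition argmax_rule (am : {set 'I_p} -> ('I_p -> R) -> 'I_p) : Prop :=
  forall (S : {set 'I_p}) (h : 'I_p -> R), S != set0 ->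
    am S h \in S /\ (forall j, j \in S -> h j <= h (am S h)).

Variables (am : {set 'I_p} -> ('I_p -> R) -> 'I_p)
          (g : {set 'I_p} -> R) (* g S = f (x_S) *) (tau : R).

(* BackSelect: list of removed indices, in order of removal
   (the stack R has its top at the END of this list). *)
Fixpoint bs_aux (n : nat) (S : {set 'I_p}) : seq 'I_p :=
  match n with
  | 0 => [::]
  | n'.+1 => if S == set0 then [::] else
      let i := am S (fun i => g (S :\ i)) in i :: bs_aux n' (S :\ i)
  end.
Definition backselect (S : {set 'I_p}) : seq 'I_p := bs_aux #|S| S.

(* Successive values taken by the variable S during BackSelect, starting
   with the input set and ending with set0. *)
Fixpoint bs_traj_aux (n : nat) (S : {set 'I_p}) : seq {set 'I_p} :=
  match n with
  | 0 => [:: S]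
  | n'.+1 => if S == set0 then [:: S] else
      let i := am S (fun i => g (S :\ i)) in S :: bs_traj_aux n' (S :\ i)
  end.
Definition bs_traj (S : {set 'I_p}) : seq {set 'I_p} := bs_traj_aux #|S| S.

(* FindSIS, with the stack given top-first. *)
Fixpoint findsis_aux (st : seq 'I_p) (S : {set 'I_p}) : option {set 'I_p} :=
  if g S < tau then
    match st with
    | [::] => None
    | i :: st' => findsis_aux st' (i |: S)
    end
  else Some S.
Definition findsis (st : seq 'I_p) : option {set 'I_p} := findsis_aux st set0.

(* SIScollection, recording for each k the pair (T_k, S_k), where T_k is the
   set passed to BackSelect in the call producing S_k.  The fuel p.+1
   bounds the number of iterations (each iteration removes >= 1 index). *)
Fixpoint sis_aux (n : nat) (S : {set 'I_p}) : seq ({set 'I_p} * {set 'I_p}) :=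
  match n with
  | 0 => [::]
  | n'.+1 =>
      match findsis (rev (backselect S)) with
      | None => [::]
      | Some Sk =>
          let S' := S :\: Sk in
          (S, Sk) :: (if g S' < tau then [::] else sis_aux n' S')
      end
  end.
Definition sis_trace : seq ({set 'I_p} * {set 'I_p}) := sis_aux p.+1 setT.
Definition sis_collection : seq {set 'I_p} := map snd sis_trace.

End Algorithms.

(* Main.v *)
Require Import Defs.
From HB Require Import structures.
From mathcomp Require Import all_boot all_order all_algebra.
Import Order.TTheory GRing.Theory Num.Theory.
Local Open Scope ring_scope.

Section Aux.
Variables (R : realFieldType) (p : nat) (am : {set 'I_p} -> ('I_p -> R) -> 'I_p)
  (g : {set 'I_p} -> R) (tau : R).
Hypothesis ham : argmax_rule am.
Hypothesis g0 : g set0 < tau.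

Lemma findsis_cat (l l' : seq 'I_p) A :
  findsis_aux g tau (l ++ l') A =
  match findsis_aux g tau l A with
  | Some X => Some X
  | None => findsis_aux g tau l' (foldl (fun S i => i |: S) A l)
  end.
Proof.
elim: l A => [|i l IH] A /=.
  case: ifP => // H; by case: l' => /=; rewrite H.
by case: ifP.
Qed.

Lemma traj_head n S : S \in bs_traj_aux am g n S.
Proof. by case: n => [|n] /=; [rewrite inE|case: ifP => _; rewrite inE eqxx]. Qed.

Lemma mainlem n (S : {set 'I_p}) : #|S| = n ->
  [/\ foldr (fun i S => i |: S) set0 (bs_aux am g #|S| S) = S,
      (forall U, U \in bs_traj_aux am g #|S| S -> U \subset S),
      (findsis_aux g tau (rev (bs_aux am g #|S| S)) set0 = None ->
         forall U, U \in bs_traj_aux am g #|S| S -> g U < tau) &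
      (forall X, findsis_aux g tau (rev (bs_aux am g #|S| S)) set0 = Some X ->
         [/\ X \in bs_traj_aux am g #|S| S, tau <= g X,
             (forall i, i \in X -> g (X :\ i) < tau) &
             (forall U, U \in bs_traj_aux am g #|S| S -> tau <= g U -> (#|X| <= #|U|)%N)])].
Proof.
elim: n S => [|n IH] S hS.
  have -> : S = set0 by apply/eqP; rewrite -cards_eq0 hS.
  rewrite cards0 /=; split => //.
  - by move=> U; rewrite inE => /eqP ->.
  - by move=> _ U; rewrite inE => /eqP ->.
  - by rewrite g0.
rewrite hS /=.
have Sn0 : S != set0 by rewrite -cards_eq0 hS.
rewrite (negbTE Sn0).
set i := am S (fun i => g (S :\ i)).
have [iS imax] := ham S (fun i => g (S :\ i)) Sn0.
rewrite -/i in iS imax.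
set S' := S :\ i.
have hS' : #|S'| = n by move: hS; rewrite (cardsD1 i S) iS add1n => -[].
have [Q1 Q2 Q4 Q5] := IH S' hS'.
rewrite hS' in Q1 Q2 Q4 Q5.
have S'S : S' \subset S by apply: subD1set.
split.
- by rewrite /= Q1 setD1K.
- move=> U; rewrite inE => /orP [/eqP -> //|/Q2 H]; exact: subset_trans H S'S.
- rewrite rev_cons -cats1 findsis_cat.
  case E: (findsis_aux _ _ _ _) => [X|] // .
  rewrite foldl_rev [foldr _ _ _](_ : _ = S') /=; last exact: Q1.
  have gS' : g S' < tau by apply: Q4 => //; exact: traj_head.
  rewrite gS' setD1K //.
  case: ifP => // gS _ U; rewrite inE => /orP [/eqP -> //|]; exact: Q4.
- move=> X; rewrite rev_cons -cats1 findsis_cat.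
  case E: (findsis_aux _ _ _ _) => [Y|].
    move=> [<-]; have [h1 h2 h3 h4] := Q5 Y E; split => //.
    + by rewrite inE h1 orbT.
    + move=> U; rewrite inE => /orP [/eqP ->|]; last exact: h4.
      move=> _; apply: subset_leq_card; exact: subset_trans (Q2 _ h1) S'S.
  rewrite foldl_rev [foldr _ _ _](_ : _ = S') /=; last exact: Q1.
  have gS' : g S' < tau by apply: Q4 => //; exact: traj_head.
  rewrite gS' setD1K //=.
  case: ifP => // /negbT; rewrite -leNgt => gS [<-]; split => //.
  + by rewrite inE eqxx.
  + move=> j jS; apply: le_lt_trans (imax j jS) gS'.
  + move=> U; rewrite inE => /orP [/eqP -> //|/(Q4 E) gU gU'].
    by move: (lt_le_trans gU gU'); rewrite ltxx.
Qed.

Lemma sis_spec n S k : (k < size (sis_aux am g tau n S))%N ->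
  findsis g tau (rev (backselect am g (nth (set0, set0) (sis_aux am g tau n S) k).1))
  = Some (nth (set0, set0) (sis_aux am g tau n S) k).2.
Proof.
elim: n S k => [|n IH] S k //=.
case E: (findsis _ _ _) => [X|] //=.
case: k => [|k] //= hk.
move: hk; case: ifP => //= _ hk; exact: IH.
Qed.

End Aux.

Theorem proposition1 (R : realFieldType) (p : nat) (d : 'I_p -> nat)
  (f : input R d -> R) (z x : input R d) (tau : R)
  (am : {set 'I_p} -> ('I_p -> R) -> 'I_p) (ham : argmax_rule am) :
  tau <= f x -> f (xmask x z set0) < tau ->
  let g := fun S : {set 'I_p} => f (xmask x z S) in
  let tr := sis_trace am g tau in
  forall k : nat, (k < size tr)%N ->
  let T := (nth (set0, set0) tr k).1 in
  let Sk := (nth (set0, set0) tr k).2 in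
  (* (i) *)
  (forall i, i \in Sk -> g (Sk :\ i) < tau) /\
  (* (ii) *)
  (Sk \in bs_traj am g T /\ tau <= g Sk /\
   forall U, U \in bs_traj am g T -> tau <= g U -> (#|Sk| <= #|U|)%N).
Proof.
move=> _ g0 g tr k hk T Sk.
have E := @sis_spec R p am g tau _ _ _ hk.
have [_ _ _ Q5] := @mainlem R p am g tau ham g0 _ T (erefl _).
have [h1 h2 h3 h4] := Q5 _ E.
by split => //; split => //; split.
Qed.
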